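(* Let $S_n=(E_{n-m},K_m)$ be a split graph in which the neighbourhoods of all vertices in $E_{n-m}$ are pairwise distinct. If some vertex $v$ of $K_m$ is adjacent to at least $d+1$ vertices of $E_{n-m}$ that have degree $d$, where $d\leq m-2$, then $S_n$ is not word-representable.
   Context: A graph $G=(V,E)$ is word-representable if there exists a word $w$ over the alphabet $V$ such that for all distinct $x,y\in V$, the letters $x$ and $y$ alternate in $w$ if and only if $xy\in E$ (alternation meaning that deleting all letters other than $x$ and $y$ leaves $xyxy\cdots$ or $yxyx\cdots$). The notation $S_n=(E_{n-m},K_m)$ denotes a split graph on $n$ vertices whose vertex set is partitioned into a maximal clique $K_m$ on $m$ vertices and an independent set $E_{n-m}$ on $n-m$ vertices. *)

(* Defs.v *)
(* Simple graphs on a finType T given by a rel e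
   (assumed symmetric and irreflexive in the theorem). *)
From mathcomp Require Import all_boot.
Set Implicit Arguments. Unset Strict Implicit. Unset Printing Implicit Defensive.

Section Defs.
Variable T : finType.

Definition alternate (w : seq T) (x y : T) : Prop :=
  let s := [seq z <- w | (z == x) || (z == y)] in
  forall i, i.+1 < size s -> nth x s i != nth x s i.+1.

Definition word_representable (e : rel T) : Prop :=
  exists w : seq T, (forall x, x \in w) /\
    (forall x y, x != y -> (alternate w x y <-> e x y)).

Definition nbhd (e : rel T) (x : T) : {set T} := [set y | e x y].

Definition is_clique (e : rel T) (A : {set T}) : Prop :=
  forall x y, x \in A -> y \in A -> x != y -> e x y.

Definition is_independent (e : rel T) (A : {set T}) : Prop :=
  forall x y, x \in A -> y \in A -> ~~ e x y.

Definition is_maximal_clique (e : rel T) (K : {set T}) : Prop :=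
  is_clique e K /\ forall u, u \notin K -> exists2 x, x \in K & ~~ e u x.

(* S_n = (E_{n-m}, K_m): vertex set partitioned into a maximal clique K
   (m = #|K|) and an independent set E. *)
Definition split_graph (e : rel T) (E K : {set T}) : Prop :=
  [/\ K :&: E = set0, K :|: E = [set: T], is_maximal_clique e K
    & is_independent e E].
End Defs.

(* Main.v *)
Require Import Defs.
From mathcomp Require Import all_boot zify.
Set Implicit Arguments. Unset Strict Implicit. Unset Printing Implicit Defensive.

Section Word.
Variable T : finType.

Definition cnt (w : seq T) (x : T) (i : nat) := count_mem x (take i w).

Lemma forall_take (P : seq T -> Prop) a w :
  (forall i, P (take i (a :: w))) <-> P [::] /\ (forall i, P (a :: take i w)).
Proof.
split.
- move=> H; split; first exact: (H 0).
  by move=> i; exact: (H i.+1).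
- by move=> [H0 H] [|i] //=.
Qed.

Lemma path_cnt (x y : T) (xy : x != y) (w : seq T) :
  (path (fun a b => a != b) y [seq z <- w | (z == x) || (z == y)] <->
     forall i, cnt w y i <= cnt w x i <= (cnt w y i).+1) /\
  (path (fun a b => a != b) x [seq z <- w | (z == x) || (z == y)] <->
     forall i, cnt w x i <= cnt w y i <= (cnt w x i).+1).
Proof.
rewrite /cnt; elim: w => [|a w [IH1 IH2]].
  by split; split=> // _ [|i].
have Hc : forall b c i, count_mem c (take i.+1 (b :: w)) = (b == c) + count_mem c (take i w) by [].
case: (eqVneq a x) => [->|ax].
  rewrite /= (eqxx x) /= eq_sym xy /= IH2.
  split; split.
  - by move=> H [|i] //; rewrite !Hc (eqxx x) (negbTE xy); move: (H i); lia.
  - by move=> H i; move: (H i.+1); rewrite !Hc (eqxx x) (negbTE xy); lia.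
  - by rewrite eqxx.
  - by move=> H; move: (H 1); rewrite !Hc (eqxx x) (negbTE xy) /= take0.
case: (eqVneq a y) => [->|ay].
  rewrite /= (eqxx y) orbT /= xy /= IH1.
  split; split.
  - by rewrite eqxx.
  - by move=> H; move: (H 1); rewrite !Hc (eqxx y) eq_sym (negbTE xy) /= take0.
  - by move=> H [|i] //; rewrite !Hc (eqxx y) eq_sym (negbTE xy); move: (H i); lia.
  - by move=> H i; move: (H i.+1); rewrite !Hc (eqxx y) eq_sym (negbTE xy); lia.
rewrite /= (negbTE ax) (negbTE ay) /= IH1 IH2.
split; split.
- by move=> H [|i] //; rewrite !Hc (negbTE ax) (negbTE ay); exact: H.
- by move=> H i; move: (H i.+1); rewrite !Hc (negbTE ax) (negbTE ay).
- by move=> H [|i] //; rewrite !Hc (negbTE ax) (negbTE ay); exact: H.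
- by move=> H i; move: (H i.+1); rewrite !Hc (negbTE ax) (negbTE ay).
Qed.

Lemma alt_cnt (w : seq T) (x y : T) (xy : x != y) :
  alternate w x y <->
  (forall i, cnt w y i <= cnt w x i <= (cnt w y i).+1) \/
  (forall i, cnt w x i <= cnt w y i <= (cnt w x i).+1).
Proof.
have [P1 P2] := path_cnt xy w.
rewrite -P1 -P2 /alternate.
set s := [seq z <- w | _].
have : all (fun z => (z == x) || (z == y)) s by apply/allP=> z; rewrite mem_filter => /andP[].
case: s => [|h s] /=.
  by split=> [_|_ i]; [left | rewrite ltn0].
move=> /andP[hxy _].
have E : (forall i, i.+1 < (size s).+1 -> nth x (h :: s) i != nth x (h :: s) i.+1)
   <-> path (fun a b => a != b) h s.
  split; first by move=> H; apply/(pathP x) => i hi; exact: H.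
  by move/(pathP x) => H i hi; exact: H.
rewrite E.
case/orP: hxy => /eqP -> /=.
- rewrite (eqxx x) /=; split; [move=> H; left; by rewrite eq_sym xy | by case=> // /andP[]].
- rewrite (eqxx y) /=; split; [move=> H; right; by rewrite xy | by case=> // /andP[]].
Qed.

End Word.

Section Order.
Variable T : finType.
Variables (w : seq T) (v : T).
Hypothesis vw : v \in w.

Lemma cnt_step (c : T) i : i < size w ->
  cnt w c i.+1 = cnt w c i + (nth v w i == c).
Proof.
move=> hi; rewrite /cnt (take_nth v hi) -cats1 count_cat /=; lia.
Qed.

Definition ev (x : T) : bool := [forall i : 'I_(size w).+1, cnt w v i <= cnt w x i].

Definition Win (x : T) := forall i,
  cnt w x i <= cnt w v i + ev x /\ cnt w v i + ev x <= (cnt w x i).+1.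

Lemma win (x : T) : x != v -> x \in w -> alternate w x v -> Win x.
Proof.
move=> xv xw /(alt_cnt w xv) [W|W]; rewrite /Win.
- have -> : ev x = true by apply/forallP => i; case/andP: (W i).
  by move=> i; move: (W i); lia.
- have -> : ev x = false.
    apply/negP => /forallP H.
    have hk : index x w < size w by rewrite index_mem.
    have := W (index x w).+1; rewrite !cnt_step // nth_index // eqxx (negbTE xv).
    have := H (Ordinal (leqW hk)) => /=; lia.
  by move=> i; move: (W i); lia.
Qed.

Definition before (a b : T) : bool :=
  [exists i : 'I_(size w).+1, (cnt w a i == cnt w v i + ev a) &&
                              (cnt w b i + 1 == cnt w v i + ev b)].

Lemma before_irr a : ~~ before a a.
Proof.
apply/negP => /existsP [i /andP [/eqP h1 /eqP h2]]; lia.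
Qed.

Lemma before_total a b : a != b -> a != v -> a \in w -> Win a -> Win b ->
  before a b || before b a.
Proof.
move=> ab av aw Wa Wb.
have hk : index a w < size w by rewrite index_mem.
have sa := cnt_step a hk; have sb := cnt_step b hk; have sv := cnt_step v hk.
rewrite nth_index // eqxx in sa; rewrite nth_index // (negbTE ab) in sb.
rewrite nth_index // (negbTE av) in sv.
have [A1 A2] := Wa (index a w); have [A3 A4] := Wa (index a w).+1.
have [B1 B2] := Wb (index a w).
case E: (cnt w b (index a w) + 1 == cnt w v (index a w) + ev b).
- apply/orP; left; apply/existsP; exists (Ordinal (hk : (index a w).+1 < (size w).+1)) => /=.
  apply/andP; split; apply/eqP; move/eqP: E; lia.
- apply/orP; right; apply/existsP; exists (Ordinal (leqW hk)) => /=.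
  apply/andP; split; apply/eqP; move/negbT/eqP: E; lia.
Qed.

Lemma after_v x : x != v -> Win x ->
  cnt w x (index v w).+1 + 1 = cnt w v (index v w).+1 + ev x.
Proof.
move=> xv Wx.
have hk : index v w < size w by rewrite index_mem.
have sx := cnt_step x hk; have sv := cnt_step v hk.
rewrite nth_index // eq_sym (negbTE xv) in sx; rewrite nth_index // eqxx in sv.
have := Wx (index v w); have := Wx (index v w).+1; lia.
Qed.

Lemma before_alt a b : a != v -> b != v -> Win a -> Win b -> a != b ->
  alternate w a b -> before a b ->
  ev a <= ev b /\ forall i, cnt w b i + ev a <= cnt w a i + ev b.
Proof.
move=> av bv Wa Wb ab /(alt_cnt w ab) AL /existsP [i1 /andP [/eqP h1 /eqP h2]].
have ja := after_v av Wa; have jb := after_v bv Wb.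
case: AL => W.
- have := W (index v w).+1; have := W i1 => X1 X2.
  split; first lia.
  move=> i; have := W i; have := Wa i; have := Wb i; lia.
- have := W (index v w).+1; have := W i1 => X1 X2.
  split; first lia.
  move=> i; have := W i; have := Wa i; have := Wb i; lia.
Qed.

Lemma before_trans a b c : a != v -> b != v -> c != v -> Win a -> Win b -> Win c ->
  a != b -> b != c -> alternate w a b -> alternate w b c ->
  before a b -> before b c -> before a c.
Proof.
move=> av bv cv Wa Wb Wc ab bc Aab Abc Bab Bbc.
have [e1 H1] := before_alt av bv Wa Wb ab Aab Bab.
have [e2 H2] := before_alt bv cv Wb Wc bc Abc Bbc.
move/existsP: Bab => [i1 /andP [/eqP h1 /eqP h2]].
apply/existsP; exists i1; apply/andP; split; apply/eqP => //.
have := H2 i1; have := Wc i1; lia.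
Qed.

Lemma before_trans_alt a b c : a != v -> b != v -> c != v -> Win a -> Win b -> Win c ->
  a != b -> b != c -> a != c -> alternate w a b -> alternate w b c ->
  before a b -> before b c -> alternate w a c.
Proof.
move=> av bv cv Wa Wb Wc ab bc ac Aab Abc Bab Bbc.
have [e1 H1] := before_alt av bv Wa Wb ab Aab Bab.
have [e2 H2] := before_alt bv cv Wb Wc bc Abc Bbc.
apply/(alt_cnt w ac).
case E: (ev a == ev c).
- left => i; have := H1 i; have := H2 i; have := Wa i; have := Wb i; have := Wc i.
  move/eqP: E; lia.
- right => i; have := H1 i; have := H2 i; have := Wa i; have := Wb i; have := Wc i.
  move/negbT/eqP: E; lia.
Qed.

End Order.

Section Count.
Variable T : finType.
Variable lt : rel T.
Variable S : {set T}.
Hypothesis irr : forall x, ~~ lt x x.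
Hypothesis trans : forall x y z, x \in S -> y \in S -> z \in S ->
  lt x y -> lt y z -> lt x z.
Hypothesis total : forall x y, x \in S -> y \in S -> x != y -> lt x y || lt y x.

Definition rank x := #|[set y in S | lt y x]|.
Definition convex (B : {set T}) := forall y1 y2 x, y1 \in B -> y2 \in B -> x \in S ->
  lt y1 x -> lt x y2 -> x \in B.

Lemma rank_lt x y : x \in S -> y \in S -> lt x y -> rank x < rank y.
Proof.
move=> xS yS xy; apply: proper_card; apply/properP; split.
- apply/subsetP => z; rewrite !inE => /andP [zS zx]; rewrite zS /=.
  exact: trans zx xy.
- by exists x; rewrite !inE ?xS ?xy ?(negbTE (irr x)).
Qed.

Lemma rank_inj : {in S &, injective rank}.
Proof.
move=> x y xS yS E; apply/eqP; apply/negP => /negP xy.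
case/orP: (total xS yS xy) => h.
- by have := rank_lt xS yS h; rewrite E ltnn.
- by have := rank_lt yS xS h; rewrite E ltnn.
Qed.

Definition is_min (B : {set T}) b := b \in B /\ forall y, y \in B -> y != b -> lt b y.

Lemma min_exists (B : {set T}) : B \subset S -> B != set0 -> exists b, is_min B b.
Proof.
move=> BS /set0Pn [x0 x0B].
case: (arg_minnP rank x0B) => b bB bmin.
exists b; split => // y yB yb.
have yS := subsetP BS y yB; have bS := subsetP BS b bB.
have by' : b != y by rewrite eq_sym.
case/orP: (total bS yS by') => // h; have := rank_lt yS bS h; have := bmin y yB; lia.
Qed.

Lemma same_min_sub (B1 B2 : {set T}) b : B1 \subset S -> B2 \subset S ->
  convex B1 -> convex B2 -> #|B1| = #|B2| -> is_min B1 b -> is_min B2 b ->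
  B1 \subset B2.
Proof.
move=> S1 S2 C1 C2 E [b1 m1] [b2 m2].
apply/subsetP => x xB1; apply/negPn/negP => xB2.
have sub : B2 \subset B1 :\ x.
  apply/subsetP => y yB2; rewrite !inE.
  have yx : y != x by apply: contraNneq xB2 => <-.
  rewrite yx /=.
  case: (eqVneq y b) => [-> //|yb].
  have lby := m2 y yB2 yb.
  have xS := subsetP S1 x xB1; have yS := subsetP S2 y yB2.
  have xb : x != b by apply: contraNneq xB2 => ->.
  have lbx := m1 x xB1 xb.
  have xy : x != y by rewrite eq_sym.
  case/orP: (total xS yS xy) => [h|h].
  - by move: xB2; rewrite (C2 b y x b2 yB2 xS lbx h).
  - exact: (C1 b x y b1 xB1 yS lby h).
have := subset_leq_card sub; have := cardsD1 x B1; rewrite xB1 -E; lia.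
Qed.

Lemma same_min (B1 B2 : {set T}) b : B1 \subset S -> B2 \subset S ->
  convex B1 -> convex B2 -> #|B1| = #|B2| -> is_min B1 b -> is_min B2 b ->
  B1 = B2.
Proof.
move=> S1 S2 C1 C2 E m1 m2; apply/eqP; rewrite eqEcard E leqnn andbT.
exact: (same_min_sub S1 S2 C1 C2 E m1 m2).
Qed.

Lemma count_convex (I : finType) (U : {set I}) (F : I -> {set T}) (L : nat) :
  (forall u, u \in U -> F u \subset S) ->
  (forall u, u \in U -> convex (F u)) ->
  (forall u, u \in U -> #|F u| = L) -> 0 < L ->
  {in U &, injective F} -> #|U| <= #|S| + 1 - L.
Proof.
move=> FS FC FL L0 Finj.
pose r u := #|[set y in S | [forall x in F u, lt y x]]|.
have key : forall u, u \in U -> exists b, [/\ is_min (F u) b, b \in S,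
    r u = rank b & rank b + L <= #|S|].
  move=> u uU.
  have ne : F u != set0 by apply/negP => /eqP e; move: (FL u uU); rewrite e cards0; lia.
  have [b [bF bm]] := min_exists (FS u uU) ne.
  have bS := subsetP (FS u uU) b bF.
  exists b; split => //.
  - rewrite /r /rank; apply: eq_card => y; rewrite !inE.
    case yS: (y \in S) => //=.
    apply/forallP/idP.
    + by move=> /(_ b); rewrite bF.
    + move=> yb x; apply/implyP => xF.
      case: (eqVneq x b) => [-> //|xb].
      exact: trans yS bS (subsetP (FS u uU) x xF) yb (bm x xF xb).
  - rewrite -(FL u uU).
    have dis : [disjoint [set y in S | lt y b] & F u].
      rewrite -setI_eq0; apply/eqP/setP => y; rewrite !inE.
      apply/negP => /andP [/andP [yS yb] yF].
      case: (eqVneq y b) => [e|ne'].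
        by move: yb; rewrite e (negbTE (irr b)).
      have := bm y yF ne'; move=> by'.
      by move: (irr y); rewrite (trans yS bS yS yb by').
    rewrite /rank.
    have : #|[set y in S | lt y b] :|: F u| <= #|S|.
      apply: subset_leq_card; apply/subsetP => y; rewrite !inE.
      by case/orP => [/andP [] //|]; apply: (subsetP (FS u uU)).
    rewrite cardsU.
    move: dis; rewrite -setI_eq0 => /eqP ->; rewrite cards0; lia.
have rinj : {in U &, injective r}.
  move=> u1 u2 u1U u2U E.
  have [b1 [m1 b1S r1 _]] := key u1 u1U.
  have [b2 [m2 b2S r2 _]] := key u2 u2U.
  have bb : b1 = b2 by apply: rank_inj => //; rewrite -r1 -r2.
  subst b2; apply: Finj => //.
  apply: (same_min (FS u1 u1U) (FS u2 u2U) (FC u1 u1U) (FC u2 u2U) _ m1 m2).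
  by rewrite !FL.
rewrite cardE -(size_map r).
have -> : #|S| + 1 - L = size (iota 0 (#|S| + 1 - L)) by rewrite size_iota.
apply: uniq_leq_size.
  rewrite map_inj_in_uniq ?enum_uniq //.
  by move=> x y; rewrite !mem_enum; exact: rinj.
move=> z /mapP [u]; rewrite mem_enum => uU ->.
have [b [_ _ rb bd]] := key u uU.
rewrite mem_iota; lia.
Qed.

End Count.

Theorem theorem11 (T : finType) (e : rel T)
  (e_sym : symmetric e) (e_irr : irreflexive e)
  (E K : {set T}) (HS : split_graph e E K)
  (Hdist : {in E &, injective (nbhd e)})
  (v : T) (d : nat) (hv : v \in K) (hd : d + 2 <= #|K|)
  (hdeg : d.+1 <= #|[set u in E | e v u && (#|nbhd e u| == d)]|) :
  ~ word_representable e.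
Proof.
case=> w [allw Hw].
case: HS => KE KEall [Kcl _] Eind.
have vw : v \in w := allw v.
set U := [set u in E | _] in hdeg.
pose S := K :\ v.
have inKE : forall x, (x \in K) || (x \in E).
  by move=> x; have := in_setT x; rewrite -KEall inE.
have notKE : forall x, x \in K -> x \in E -> False.
  move=> x xK xE; have : x \in K :&: E by rewrite inE xK xE.
  by rewrite KE inE.
have altE : forall x y, x != y -> e x y -> alternate w x y.
  by move=> x y xy /(Hw x y xy).
have altN : forall x y, x != y -> ~~ e x y -> ~ alternate w x y.
  by move=> x y xy /negP ne /(Hw x y xy).
have WinN : forall x, x != v -> e x v -> Win w v x.
  by move=> x xv exv; apply: win => //; exact: altE.
have SK : forall x, x \in S -> x \in K /\ x != v.
  by move=> x; rewrite !inE => /andP [].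
have WinS : forall x, x \in S -> Win w v x.
  move=> x /SK [xK xv]; apply: WinN => //; exact: Kcl.
have UE : forall u, u \in U -> [/\ u \in E, e v u & #|nbhd e u| = d].
  by move=> u; rewrite inE => /and3P [uE evu /eqP].
have Uv : forall u, u \in U -> u != v.
  move=> u /UE [uE _ _]; apply/negP => /eqP uv; subst u; exact: notKE hv uE.
have UK : forall u x, u \in U -> x \in K -> u != x.
  move=> u x /UE [uE _ _] xK; apply/negP => /eqP ux; subst u; exact: notKE xK uE.
have WinU : forall u, u \in U -> Win w v u.
  move=> u uU; apply: WinN; first exact: Uv.
  by rewrite e_sym; case: (UE u uU).
have NK : forall u y, u \in U -> e u y -> y \in K.
  move=> u y /UE [uE _ _] euy; case/orP: (inKE y) => // yE.
  by move: (Eind u y uE yE); rewrite euy.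
pose B u := S :\: nbhd e u.
have Sne : forall x y, x \in S -> y \in S -> before w v x y -> x != y.
  move=> x y _ _ bxy; apply: contraTneq bxy => ->; exact: before_irr.
have trans : forall x y z, x \in S -> y \in S -> z \in S ->
    before w v x y -> before w v y z -> before w v x z.
  move=> x y z xS yS zS bxy byz.
  have [xK xv] := SK x xS; have [yK yv] := SK y yS; have [zK zv] := SK z zS.
  have xy := Sne x y xS yS bxy; have yz := Sne y z yS zS byz.
  apply: (before_trans vw xv yv zv (WinS x xS) (WinS y yS) (WinS z zS) xy yz) => //.
  - by apply: altE => //; exact: Kcl.
  - by apply: altE => //; exact: Kcl.
have total : forall x y, x \in S -> y \in S -> x != y ->
    before w v x y || before w v y x.
  move=> x y xS yS xy; have [xK xv] := SK x xS.
  exact: (before_total vw xy xv (allw x) (WinS x xS) (WinS y yS)).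
have cardS : #|S| = #|K| - 1 by rewrite /S; have := cardsD1 v K; rewrite hv /=; lia.
have Sin : forall x, (x \in S) = (x != v) && (x \in K) by move=> x; rewrite !inE.
clearbody S.
have dpos : 0 < d.
  have : 0 < #|U| by lia.
  case/card_gt0P => u uU.
  case: (UE u uU) => _ evu <-; apply/card_gt0P; exists v; rewrite inE e_sym //.
have := @count_convex T (before w v) S (@before_irr T w v vw) trans total _ U B (#|K| - d).
have FS : forall u, u \in U -> B u \subset S by move=> u _; exact: subsetDl.
have FC : forall u, u \in U -> convex (before w v) S (B u).
  move=> u uU y1 y2 x; rewrite /B !in_setD => /andP [ny1 y1S] /andP [ny2 y2S] xS b1 b2.
  move: ny1 ny2; rewrite /nbhd !inE => ny1 ny2.
  rewrite xS andbT /nbhd; apply/negP => eux.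
  have [xK xv] := SK x xS; have [y1K y1v] := SK y1 y1S; have [y2K y2v] := SK y2 y2S.
  have uv := Uv u uU; have Wu := WinU u uU.
  case/orP: (before_total vw (UK u x uU xK) uv (allw u) Wu (WinS x xS)) => bu.
  - have := before_trans_alt vw uv xv y2v Wu (WinS x xS) (WinS y2 y2S)
      (UK u x uU xK) (Sne x y2 xS y2S b2) (UK u y2 uU y2K) (altE _ _ (UK u x uU xK) eux)
      (altE _ _ (Sne x y2 xS y2S b2) (Kcl _ _ xK y2K (Sne x y2 xS y2S b2))) bu b2.
    by apply: altN => //; exact: UK.
  - have y1x := Sne y1 x y1S xS b1.
    have xu : x != u by rewrite eq_sym; exact: UK.
    have y1u : y1 != u by rewrite eq_sym; exact: UK.
    have exu : e x u by rewrite e_sym.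
    have := before_trans_alt vw y1v xv uv (WinS y1 y1S) (WinS x xS) Wu
      y1x xu y1u (altE _ _ y1x (Kcl _ _ y1K xK y1x)) (altE _ _ xu exu) b1 bu.
    by apply: altN => //; rewrite e_sym.
have FL : forall u, u \in U -> #|B u| = #|K| - d.
  move=> u uU; rewrite cardsD cardS.
  have -> : S :&: nbhd e u = nbhd e u :\ v.
    apply/setP => y; rewrite in_setI Sin !inE; case: (eqVneq y v) => //= _.
    by case euy: (e u y); rewrite ?andbT ?andbF //; exact: NK euy.
  have [_ evu Nd] := UE u uU.
  have := cardsD1 v (nbhd e u); rewrite inE e_sym evu Nd; lia.
have Finj : {in U &, injective B}.
  move=> u1 u2 u1U u2U EB; apply: Hdist; first by case: (UE u1 u1U).
    by case: (UE u2 u2U).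
  apply/setP => y; rewrite /nbhd !inE.
  case: (eqVneq y v) => [->|yv].
    have [_ h1 _] := UE u1 u1U; have [_ h2 _] := UE u2 u2U.
    by rewrite e_sym h1 e_sym h2.
  case yK: (y \in K); last first.
    case e1: (e u1 y); first by move: (NK u1 y u1U e1); rewrite yK.
    case e2: (e u2 y); first by move: (NK u2 y u2U e2); rewrite yK.
    by [].
  move/setP: EB => /(_ y); rewrite /B !in_setD Sin yv yK /nbhd !inE /=.
  by case: (e u1 y); case: (e u2 y).
move=> /(_ FS FC FL _ Finj) H.
have L0 : 0 < #|K| - d by lia.
move: (H L0) hdeg; rewrite cardS; lia.
Qed.
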